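(* Let $n=4k$ with $k\ge2$, let $\varrho$ be a primitive element of $\mathbb{F}_{2^n}$, let $\omega=\varrho^{(2^k-1)(2^{2k}+1)}$, and let $G(x)=\mathrm{Tr}^{4k}_k(\omega x^{2^k+1})$, with components $G_\lambda(x)=\mathrm{Tr}^k_1(\lambda G(x))=\mathrm{Tr}^n_1(\lambda\omega x^{2^k+1})$ for $\lambda\in\mathbb{F}_{2^k}^*$. Let $\lambda_0=(\omega+\omega^{2^k})^{-1}$. Then $\lambda_0\in\mathbb{F}_{2^k}^*$, $\mathrm{Tr}^k_1(\lambda_0)=1$, and $G_{\lambda_0}$ is a self-dual bent function. For any $\lambda\in\mathbb{F}_{2^k}^*$, letting $\delta$ be the unique element of $\mathbb{F}_{2^k}^*$ with $\delta^{2^k+1}=\lambda\lambda_0^{-1}$, one has $G_\lambda^*(x)=G_{\lambda_0}(\delta^{-1}x)$. In particular, for any $a,b\in\mathbb{F}_{2^{2k}}^*$ with $ab^{2^k}\in\mathbb{F}_{2^k}$, $D_aD_bG_\lambda^*=0$ for all $\lambda\in\mathbb{F}_{2^k}^*$ with $\mathrm{Tr}^k_1(\lambda)=1$.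
   Context: $\mathrm{Tr}^m_1(x)=\sum_{i=0}^{m-1}x^{2^i}$ and $\mathrm{Tr}^{4k}_k(x)=x+x^{2^k}+x^{2^{2k}}+x^{2^{3k}}$. For a bent Boolean function $f$ on $\mathbb{F}_{2^n}$ (i.e. $|W_f(a)|=2^{n/2}$ for all $a$, $W_f(a)=\sum_x(-1)^{f(x)+\mathrm{Tr}^n_1(ax)}$), the dual $f^*$ is defined by $W_f(a)=2^{n/2}(-1)^{f^*(a)}$; $f$ is self-dual if $f^*=f$. $D_aD_bf(x)=f(x)+f(x+a)+f(x+b)+f(x+a+b)$. *)

(* Defs.v *)
(* F_{2^n} is modelled as an arbitrary finite field F with #|F| = 2^n. *)
From HB Require Import structures.
From mathcomp Require Import all_boot all_order all_algebra all_field.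
Set Implicit Arguments. Unset Strict Implicit. Unset Printing Implicit Defensive.
Import Order.TTheory GRing.Theory Num.Theory.
Local Open Scope ring_scope.

Section Defs.
Variable F : finFieldType.

Definition tr1 (m : nat) (x : F) : F := \sum_(i < m) x ^+ (2 ^ i).

Definition tr4k (k : nat) (x : F) : F := \sum_(i < 4) x ^+ (2 ^ (k * i)).

Definition inSub (m : nat) (x : F) : bool := x ^+ (2 ^ m) == x.

(* Boolean functions F -> F_2, with F_2 represented by bool *)
Definition walsh (n : nat) (f : F -> bool) (a : F) : int :=
  \sum_(x : F) (-1) ^+ (addb (f x) (tr1 n (a * x) == 1)).

Definition bent (n : nat) (f : F -> bool) : Prop :=
  forall a, `|walsh n f a| = (2 ^ (n %/ 2))%:Z.

(* dual: W_f(a) = 2^(n/2) (-1)^(f^*(a)), i.e. f^*(a) = 1 iff W_f(a) = -2^(n/2) *)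
Definition dual (n : nat) (f : F -> bool) (a : F) : bool :=
  walsh n f a == - (2 ^ (n %/ 2))%:Z.

Definition self_dual (n : nat) (f : F -> bool) : Prop :=
  bent n f /\ forall a, dual n f a = f a.

Definition DD (f : F -> bool) (a b x : F) : bool :=
  addb (addb (f x) (f (x + a))) (addb (f (x + b)) (f (x + a + b))).

Definition Gfun (k : nat) (omega x : F) : F := tr4k k (omega * x ^+ (2 ^ k + 1)).
Definition Gl (k : nat) (omega lam : F) (x : F) : bool :=
  tr1 k (lam * Gfun k omega x) == 1.

End Defs.

(* Main.v *)
Require Import Defs.
From HB Require Import structures.
From mathcomp Require Import all_boot all_order all_algebra all_field.
From mathcomp Require Import ring zify.
Set Implicit Arguments. Unset Strict Implicit. Unset Printing Implicit Defensive.
Import Order.TTheory GRing.Theory Num.Theory.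
Local Open Scope ring_scope.

Section Basics.
Variable F : finFieldType.
Variable k : nat.
Hypothesis ch2 : 2%N \in [pchar F].
Hypothesis hfix : forall x : F, x ^+ (2 ^ (4 * k)) = x.

Lemma add2 (x : F) : x + x = 0. Proof. exact: addrr_pchar2 ch2 x. Qed.

Lemma frobD i (x y : F) : (x + y) ^+ (2 ^ i) = x ^+ (2 ^ i) + y ^+ (2 ^ i).
Proof.
elim: i => [|i IH]; first by rewrite !expr1.
by rewrite expnS mulnC !exprM IH sqrrD mulr2n add2 addr0.
Qed.

Lemma frob_sum i (I : finType) (P : pred I) (f : I -> F) :
  (\sum_(j | P j) f j) ^+ (2 ^ i) = \sum_(j | P j) (f j) ^+ (2 ^ i).
Proof.
apply: (big_morph (fun x => x ^+ (2 ^ i)) (frobD i)).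
by rewrite expr0n expn_eq0.
Qed.

Lemma trD m (x y : F) : tr1 m (x + y) = tr1 m x + tr1 m y.
Proof. by rewrite /tr1 -big_split; apply: eq_bigr => i _; apply: frobD. Qed.

Lemma tr_frob m j (x : F) : (tr1 m x) ^+ (2 ^ j) = tr1 m (x ^+ (2 ^ j)).
Proof.
rewrite /tr1 frob_sum; apply: eq_bigr => i _.
by rewrite -!exprM mulnC.
Qed.

Lemma tr1_0 m : tr1 m (0 : F) = 0.
Proof. by rewrite /tr1 big1 // => i _; rewrite expr0n expn_eq0. Qed.

Lemma tr_tele m (y : F) : tr1 m (y ^+ 2 + y) = y ^+ (2 ^ m) + y.
Proof.
elim: m => [|m IH]; first by rewrite /tr1 big_ord0 expn0 expr1 add2.
rewrite /tr1 big_ord_recr /=; rewrite /tr1 in IH; rewrite IH frobD -exprM -expnS.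
have -> : y ^+ (2 ^ m) + y + (y ^+ (2 ^ m.+1) + y ^+ (2 ^ m))
   = y ^+ (2 ^ m.+1) + y + (y ^+ (2 ^ m) + y ^+ (2 ^ m)) by ring.
by rewrite add2 addr0.
Qed.

Lemma tr_split m (z : F) : tr1 (m + m) z = tr1 m (z + z ^+ (2 ^ m)).
Proof.
rewrite /tr1 big_split_ord /= -big_split /=; apply: eq_bigr => i _.
by rewrite frobD -exprM -expnD.
Qed.

Lemma tr_sq_fix m (x : F) : x ^+ (2 ^ m) = x -> tr1 m (x ^+ 2) = tr1 m x.
Proof.
case: m => [|m] h; first by rewrite /tr1 !big_ord0.
rewrite /tr1 big_ord_recr big_ord_recl /= -exprM -expnS h expn0 expr1 addrC.
congr (_ + _); apply: eq_bigr => i _; by rewrite -exprM -expnS.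
Qed.

Definition T (z : F) := tr1 (4 * k) z.

Lemma T_sq z : T (z ^+ 2) = T z.
Proof. exact: tr_sq_fix (hfix z). Qed.

Lemma T_pow j z : T (z ^+ (2 ^ j)) = T z.
Proof.
elim: j => [|j IH]; first by rewrite expr1.
by rewrite expnS mulnC exprM T_sq.
Qed.

Lemma T01 z : T z = 0 \/ T z = 1.
Proof.
have h : (T z) ^+ 2 = T z.
  by have := tr_frob (4 * k) 1 z; rewrite expn1 /T => ->; exact: T_sq.
have : T z * (T z - 1) = 0 by rewrite mulrBr mulr1 -expr2 h subrr.
by move/eqP; rewrite mulf_eq0 subr_eq0 => /orP[/eqP|/eqP]; [left|right].
Qed.

Lemma h01 : (0 == 1 :> F) = false. Proof. by rewrite eq_sym oner_eq0. Qed.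

Lemma Teq1D y z : (T (y + z) == 1) = (T y == 1) (+) (T z == 1).
Proof.
rewrite /T trD -/(T y) -/(T z).
by case: (T01 y) => ->; case: (T01 z) => ->;
  rewrite ?addr0 ?add0r ?add2 ?eqxx ?h01.
Qed.

Definition s (z : F) : int := (-1) ^+ (T z == 1).

Lemma sD y z : s (y + z) = s y * s z.
Proof. by rewrite /s Teq1D signr_addb. Qed.

Definition Fr (x : F) := x ^+ (2 ^ k).

Lemma FrD x y : Fr (x + y) = Fr x + Fr y. Proof. exact: frobD. Qed.
Lemma FrM x y : Fr (x * y) = Fr x * Fr y. Proof. exact: exprMn. Qed.
Lemma FrV x : Fr (x^-1) = (Fr x)^-1. Proof. exact: exprVn. Qed.
Lemma Fr0 : Fr 0 = 0. Proof. by rewrite /Fr expr0n expn_eq0. Qed.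
Lemma Fr1 : Fr 1 = 1. Proof. exact: expr1n. Qed.
Lemma Fr2 x : Fr (Fr x) = x ^+ (2 ^ (2 * k)).
Proof. by rewrite /Fr -exprM -expnD mul2n addnn. Qed.
Lemma Fr4 x : Fr (Fr (Fr (Fr x))) = x.
Proof.
rewrite /Fr -!exprM -!expnD.
by rewrite (_ : (k + (k + (k + k)) = 4 * k)%N) ?hfix //; lia.
Qed.
Lemma Fr_inj x y : Fr x = Fr y -> x = y.
Proof. by move=> h; rewrite -(Fr4 x) -(Fr4 y) h. Qed.
Lemma T_Fr z : T (Fr z) = T z. Proof. exact: T_pow. Qed.

Lemma T_split2 z : T z = tr1 (2 * k) (z + Fr (Fr z)).
Proof.
by rewrite /T (_ : (4 * k = 2 * k + 2 * k)%N) ?tr_split ?Fr2 //; lia.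
Qed.

Lemma tr2k_split z : tr1 (2 * k) z = tr1 k (z + Fr z).
Proof. by rewrite mul2n -addnn tr_split. Qed.

Lemma T_V v : Fr (Fr v) = v -> T v = 0.
Proof. by move=> h; rewrite T_split2 h add2 tr1_0. Qed.

Section Omega.
Variable om : F.
Hypothesis hom1 : Fr om * om = 1.
Hypothesis homt : om + Fr om != 0.


Definition l0 := (om + Fr om)^-1.

Lemma om_neq0 : om != 0.
Proof. by apply/eqP => h; move: hom1; rewrite h mulr0 => /eqP; rewrite eq_sym oner_eq0. Qed.

Lemma Fr_om : Fr om = om^-1.
Proof. by rewrite -[Fr om]mulr1 -(divff om_neq0) mulrA hom1 mul1r. Qed.

Lemma FrFr_om : Fr (Fr om) = om.
Proof. by rewrite Fr_om FrV Fr_om invrK. Qed.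

Lemma Fr_l0 : Fr l0 = l0.
Proof. by rewrite /l0 FrV FrD FrFr_om addrC. Qed.

Lemma l0_neq0 : l0 != 0.
Proof. by rewrite /l0 invr_eq0. Qed.

Lemma l0t : l0 * (om + Fr om) = 1.
Proof. by rewrite /l0 mulVf. Qed.

Lemma tr_l0 : tr1 k l0 = 1.
Proof.
rewrite -(tr_sq_fix Fr_l0).
set y := om * l0.
have e1 : y ^+ 2 + y = l0 ^+ 2 * (om ^+ 2 + om * (om + Fr om))
            + om * l0 * (1 - l0 * (om + Fr om)) by rewrite /y; ring.
have e2 : om ^+ 2 + om * (om + Fr om) = om ^+ 2 + om ^+ 2 + Fr om * om by ring.
rewrite e2 add2 add0r hom1 mulr1 l0t subrr mulr0 addr0 in e1.
rewrite -e1 tr_tele /y.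
have -> : om * l0 = (om * l0) ^+ 1 by rewrite expr1.
by rewrite -/(Fr (om * l0)) FrM Fr_l0 -mulrDl addrC mulrC l0t.
Qed.

Definition VP : {pred F} := [pred v | Fr (Fr v) == v].

Lemma sum_eq0 (a b : F) : a + b = 0 -> a = b.
Proof. by move/eqP; rewrite addr_eq0 (oppr_pchar2 ch2) => /eqP. Qed.

Lemma nondeg w : Fr (Fr w) != w -> exists v, Fr (Fr v) = v /\ T (w * v) = 1.
Proof.
move=> hw.
set sw := w + Fr (Fr w).
have sw0 : sw != 0.
  by apply/eqP => /sum_eq0 h; rewrite -h eqxx in hw.
have Fsw : Fr (Fr sw) = sw by rewrite /sw !FrD Fr4 addrC.
set y := om * l0 ^+ 2.
have Fl2 : Fr (l0 ^+ 2) = l0 ^+ 2.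
  by rewrite /Fr -exprM mulnC exprM -/(Fr l0) Fr_l0.
have Fy : Fr (Fr y) = y by rewrite /y FrM Fl2 FrM Fl2 FrFr_om.
have [v Fv yv] : exists2 v, Fr (Fr v) = v & sw * v = y.
  exists (y / sw); last by rewrite mulrC -mulrA mulVf // mulr1.
  by rewrite FrM FrV FrM FrV Fy Fsw.
have swdef : w + Fr (Fr w) = sw by [].
have ydef : y = om * l0 ^+ 2 by [].
clearbody y sw.
exists v; split => //.
rewrite T_split2 FrM FrM Fv -mulrDl swdef yv ydef tr2k_split FrM Fl2.
by rewrite -mulrDl mulrC expr2 -mulrA l0t mulr1 tr_l0.
Qed.



Lemma s_Fr z : s (Fr z) = s z. Proof. by rewrite /s T_Fr. Qed.
Lemma s3 z : s (Fr (Fr (Fr z))) = s z. Proof. by rewrite !s_Fr. Qed.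
Lemma s0 : s 0 = 1. Proof. by rewrite /s /T tr1_0 h01. Qed.
Lemma s_V v : Fr (Fr v) = v -> s v = 1. Proof. by move=> h; rewrite /s T_V // h01. Qed.

Lemma VPE v : (v \in VP) = (Fr (Fr v) == v). Proof. by []. Qed.

Lemma VP_add v0 v : v0 \in VP -> (v + v0 \in VP) = (v \in VP).
Proof.
rewrite !VPE => /eqP h; rewrite !FrD h.
by apply/eqP/eqP => [/addIr|->].
Qed.

Lemma inner_in w : Fr (Fr w) = w -> \sum_(v in VP) s (w * v) = #|VP|%:R.
Proof.
move=> hw; rewrite -sumr_const; apply: eq_bigr => v; rewrite VPE => /eqP hv.
by apply: s_V; rewrite !FrM hw hv.
Qed.

Lemma inner_out w : Fr (Fr w) != w -> \sum_(v in VP) s (w * v) = 0.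
Proof.
move=> /nondeg [v0 [hv0 hT]].
set S := \sum_(v in VP) s (w * v).
have hS : S = - S.
  rewrite {1}/S (reindex_inj (addIr v0)) /=.
  rewrite (eq_bigl (fun v => v \in VP)); last by move=> v; rewrite VP_add // VPE hv0.
  rewrite /S -sumrN; apply: eq_bigr => v _.
  by rewrite mulrDr sD /s hT eqxx expr1 mulrN1.
by move/eqP: hS; rewrite -addr_eq0 -mulr2n mulrn_eq0 /= => /eqP.
Qed.

Lemma inner w : \sum_(v in VP) s (w * v) = if Fr (Fr w) == w then #|VP|%:R else 0.
Proof. by case: eqP => h; [apply: inner_in | apply: inner_out; apply/eqP]. Qed.

Lemma Xq1 (x : F) : x ^+ (2 ^ k + 1) = Fr x * x.
Proof. by rewrite addn1 exprSr. Qed.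

Lemma Fr_iter i (x : F) : x ^+ (2 ^ (k * i)) = iter i Fr x.
Proof.
elim: i => [|i IH]; first by rewrite muln0 expn0 expr1.
by rewrite mulnS expnD mulnC exprM IH.
Qed.

Lemma Gl_T lam x : Fr lam = lam ->
  Gl k om lam x = (T (lam * (om * x ^+ (2 ^ k + 1))) == 1).
Proof.
move=> hl; rewrite /Gl /Gfun /tr4k; move: (om * _) => y.
rewrite !big_ord_recr big_ord0 /= !Fr_iter /= add0r T_split2 tr2k_split.
rewrite !FrD !FrM !hl.
congr (tr1 k _ == 1); ring.
Qed.


Section Walsh.
Variables lam nu : F.
Hypothesis Flam : Fr lam = lam.
Hypothesis Fnu : Fr nu = nu.
Hypothesis nu0 : nu != 0.
Hypothesis hlam : lam * (om + Fr om) = nu.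

Definition g a x := lam * (om * (Fr x * x)) + a * x.
Definition wf a x := nu * Fr (Fr (Fr x)) + a.

Lemma walsh_s a : walsh (4 * k) (Gl k om lam) a = \sum_x s (g a x).
Proof.
rewrite /walsh; apply: eq_bigr => x _.
by rewrite Gl_T // Xq1 /g /s Teq1D.
Qed.

Lemma shift a x v : Fr (Fr v) = v -> s (g a (x + v)) = s (g a x) * s (wf a x * v).
Proof.
move=> hv.
have e : g a (x + v) = g a x + lam * (om * (Fr v * v))
   + (lam * (om * (Fr x * v)) + lam * (om * (x * Fr v))) + a * v.
  by rewrite /g FrD; ring.
rewrite e !sD [s (lam * (om * (Fr v * v)))]s_V ?mulr1; last first.
  by rewrite !FrM !Flam FrFr_om hv.
have key : s (lam * (om * (Fr x * v))) * s (lam * (om * (x * Fr v)))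
    = s (nu * (Fr (Fr (Fr x)) * v)).
  rewrite -[s (lam * (om * (Fr x * v)))]s3 -sD -[s (nu * _)]s_Fr.
  congr s; rewrite !FrM !Flam !Fnu FrFr_om Fr4 hv -hlam; ring.
rewrite key.
by rewrite -!mulrA -sD; congr (_ * (_ * s _)); rewrite /wf; ring.
Qed.

Lemma walsh_formula a :
  walsh (4 * k) (Gl k om lam) a = #|VP|%:R * s (lam * (om * (Fr a * a)) / nu ^+ 2).
Proof.
set N := #|VP|.
have N0 : (N%:R : int) != 0.
  rewrite pnatr_eq0 -lt0n; apply/card_gt0P; exists 0; by rewrite VPE !Fr0.
rewrite walsh_s; apply: (mulfI N0).
have E1 : N%:R * \sum_x s (g a x)
    = \sum_x s (g a x) * (if Fr (Fr (wf a x)) == wf a x then N%:R else 0).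
  rewrite mulr_natl -sumr_const.
  rewrite (eq_bigr (fun v => \sum_x s (g a x) * s (wf a x * v))); last first.
    move=> v; rewrite VPE => /eqP hv.
    rewrite (reindex_inj (addIr v)) /=; apply: eq_bigr => x _; exact: shift.
  rewrite exchange_big /=; apply: eq_bigr => x _.
  by rewrite -mulr_sumr inner.
set c := Fr a / nu.
have wc0 : wf a c = 0.
  by rewrite /wf /c !FrM !FrV !Fnu Fr4 mulrCA mulfV // mulr1 add2.
have E2 : \sum_x s (g a x) * (if Fr (Fr (wf a x)) == wf a x then N%:R else 0)
    = \sum_(v in VP) s (g a c) * N%:R.
  rewrite (eq_bigr (fun x => if Fr (Fr (wf a x)) == wf a x then s (g a x) * N%:R else 0));
    last by move=> x _; case: ifP; rewrite ?mulr0.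
  rewrite -big_mkcond /= (reindex_inj (addrI c)) /=.
  rewrite (eq_bigl (fun v => v \in VP)); last first.
    move=> v; rewrite VPE.
    have -> : wf a (c + v) = nu * Fr (Fr (Fr v)).
      by move: wc0; rewrite /wf !FrD mulrDr addrAC => ->; rewrite add0r.
    rewrite !FrM !Fnu Fr4.
    apply/eqP/eqP => [/(mulfI nu0) /Fr_inj h|h]; first by rewrite -h.
    by rewrite h.
  apply: eq_bigr => v hv; have {hv} hv : Fr (Fr v) = v by apply/eqP.
  by rewrite shift // wc0 mul0r s0 mulr1.
rewrite E1 E2 sumr_const -/N.
suff -> : s (g a c) = s (lam * (om * (Fr a * a)) / nu ^+ 2) by ring.
rewrite /g sD -[s (lam * _)]s3 -sD; congr s.
rewrite /c !FrM !FrV !Fnu !Flam !Fr4 FrFr_om.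
transitivity (lam * (om * (Fr a * a)) / nu ^+ 2
  + (lam * (Fr om * (Fr a * a)) + lam * (Fr om * (Fr a * a))) / nu ^+ 2
  + a * Fr a * (nu - lam * (om + Fr om)) / nu ^+ 2); first by field.
by rewrite add2 hlam subrr mulr0 !mul0r !addr0.
Qed.

End Walsh.



Section Final.
Hypothesis hk : (0 < k)%N.
Hypothesis hcard : #|VP| = (2 ^ (2 * k))%N.

Lemma div42 : ((4 * k) %/ 2 = 2 * k)%N.
Proof. by rewrite (_ : (4 * k = 2 * k * 2)%N) ?mulnK //; lia. Qed.

Lemma bent_val lam nu : Fr lam = lam -> Fr nu = nu -> nu != 0 ->
  lam * (om + Fr om) = nu -> bent (4 * k) (Gl k om lam).
Proof.
move=> Fl Fn n0 hl a; rewrite (walsh_formula Fl Fn n0 hl) hcard div42.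
by rewrite /s normrM normr_sign mulr1 normr_nat natz.
Qed.

Lemma dual_val lam nu : Fr lam = lam -> Fr nu = nu -> nu != 0 ->
  lam * (om + Fr om) = nu -> forall a,
  dual (4 * k) (Gl k om lam) a = (T (lam * (om * (Fr a * a)) / nu ^+ 2) == 1).
Proof.
move=> Fl Fn n0 hl a; rewrite /dual (walsh_formula Fl Fn n0 hl) hcard div42 /s.
case: (T _ == 1) => /=; first by rewrite expr1 mulrN1 natz eqxx.
rewrite expr0 mulr1 natz; apply/negbTE/eqP => h.
have : (0 < 2 ^ (2 * k))%N by rewrite expn_gt0.
move: h; set m := (2 ^ (2 * k))%N => h; lia.
Qed.



Lemma inSubP x : inSub k x -> Fr x = x. Proof. by move/eqP. Qed.

Lemma Pd2 d : Fr d = d -> d ^+ (2 ^ k + 1) = d ^+ 2.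
Proof. by move=> h; rewrite Xq1 h expr2. Qed.

Lemma Fr_sq d : Fr (d ^+ 2) = (Fr d) ^+ 2.
Proof. by rewrite /Fr -!exprM mulnC. Qed.

Lemma part4 (lam : F) : lam != 0 -> inSub k lam ->
  let P := fun d : F => [/\ d != 0, inSub k d & d ^+ (2 ^ k + 1) = lam / l0] in
  (exists d, P d) /\ (forall d1 d2, P d1 -> P d2 -> d1 = d2) /\
  (forall d, P d -> forall x, dual (4 * k) (Gl k om lam) x = Gl k om l0 (d^-1 * x)).
Proof.
move=> lam0 /inSubP Flam P.
have Fx : Fr (lam / l0) = lam / l0 by rewrite FrM FrV Fr_l0 Flam.
split; last split.
- pose d := (lam / l0) ^+ (2 ^ (4 * k).-1).
  have d2 : d ^+ 2 = lam / l0.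
    by rewrite /d -exprM -expnSr prednK ?hfix // muln_gt0 hk.
  have Fd : Fr d = d by rewrite /d /Fr -exprM mulnC exprM -/(Fr _) Fx.
  exists d; split.
  + by apply/eqP => h; move: d2; rewrite h expr0n /= => /esym/eqP;
       rewrite mulf_eq0 invr_eq0 (negbTE lam0) (negbTE l0_neq0).
  + exact/eqP.
  + by rewrite Pd2.
- move=> d1 d2 [_ /inSubP F1 e1] [_ /inSubP F2 e2].
  rewrite Pd2 // in e1; rewrite Pd2 // in e2.
  have : (d1 + d2) ^+ 2 = 0.
    by have := frobD 1 d1 d2; rewrite expn1 => ->; rewrite e1 e2 add2.
  by move/eqP; rewrite expf_eq0 /= => /eqP /sum_eq0.
- move=> d [d0 /inSubP Fd ed] x.
  rewrite Pd2 // in ed.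
  have Fn : Fr (d ^+ 2) = d ^+ 2 by rewrite Fr_sq Fd.
  have n0 : d ^+ 2 != 0 by rewrite expf_neq0.
  have elam : lam = d ^+ 2 * l0 by rewrite ed divfK // l0_neq0.
  have hl : lam * (om + Fr om) = d ^+ 2 by rewrite elam -mulrA l0t mulr1.
  rewrite (dual_val Flam Fn n0 hl) Gl_T ?Fr_l0 //; congr (T _ == 1).
  rewrite Xq1 FrM FrV Fd elam.
  have l00 := l0_neq0.
  by field.
Qed.

Lemma all_parts :
  [/\ l0 != 0 /\ inSub k l0,
      tr1 k l0 = 1,
      self_dual (4 * k) (Gl k om l0),
      (forall lam : F, lam != 0 -> inSub k lam ->
         let P := fun d : F => [/\ d != 0, inSub k d & d ^+ (2 ^ k + 1) = lam / l0] in
         (exists d, P d) /\ (forall d1 d2, P d1 -> P d2 -> d1 = d2) /\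
         (forall d, P d -> forall x, dual (4 * k) (Gl k om lam) x = Gl k om l0 (d^-1 * x)))
    & (forall a b : F, a != 0 -> b != 0 -> inSub (2 * k) a -> inSub (2 * k) b ->
         inSub k (a * b ^+ (2 ^ k)) ->
         forall lam : F, lam != 0 -> inSub k lam -> tr1 k lam = 1 ->
         forall x, DD (dual (4 * k) (Gl k om lam)) a b x = false)].
Proof.
have one0 : (1 : F) != 0 by exact: oner_neq0.
have hl1 : l0 * (om + Fr om) = 1 by exact: l0t.
split.
- by split; [exact: l0_neq0 | apply/eqP; exact: Fr_l0].
- exact: tr_l0.
- split; first exact: (bent_val Fr_l0 Fr1 one0 hl1).
  move=> a; rewrite (dual_val Fr_l0 Fr1 one0 hl1) Gl_T ?Fr_l0 //.
  by rewrite Xq1 expr1n divr1.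
- exact: part4.
move=> a b a0 b0 ha hb hab lam lam0 hlF htr x.
have [[d Pd] [_ hd]] := part4 lam0 hlF.
have Qe : forall y, dual (4 * k) (Gl k om lam) y = (T (l0 * om / d ^+ 2 * (Fr y * y)) == 1).
  move=> y; rewrite (hd d Pd) Gl_T ?Fr_l0 //; congr (T _ == 1).
  case: Pd => d0 /inSubP Fd _.
  rewrite Xq1 FrM FrV Fd; by field.
have Fb : Fr (Fr b) = b by rewrite Fr2; apply/eqP.
have eab : Fr a * b = a * Fr b.
  by move/eqP: hab; rewrite -/(Fr (a * Fr b)) FrM Fb.
rewrite /DD !Qe -!Teq1D.
set K := l0 * om / d ^+ 2.
set Z := Fr x * x + Fr x * x + Fr x * (a + b) + x * (Fr a + Fr b) + Fr a * a + Fr b * b.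
have -> : K * (Fr x * x) + K * (Fr (x + a) * (x + a)) +
    (K * (Fr (x + b) * (x + b)) + K * (Fr (x + a + b) * (x + a + b)))
    = K * ((Z + Z) + (Fr a * b + a * Fr b)).
  by rewrite /Z !FrD; ring.
by rewrite add2 add0r eab add2 mulr0 /T tr1_0 h01.
Qed.

End Final.
End Omega. End Basics.

Lemma card_VP (F : finFieldType) (k : nat) (hk : (0 < k)%N)
  (rho : F) (hrho : (2 ^ (4 * k) - 1)%N.-primitive_root rho) :
  #|@VP F k| = (2 ^ (2 * k))%N.
Proof.
set Q := (2 ^ (2 * k))%N.
have hQ : (2 ^ (4 * k) = Q * Q)%N by rewrite /Q -expnD (_ : (4 * k = 2 * k + 2 * k)%N) //; lia.
have Q1 : (1 < Q)%N by rewrite /Q -{1}(expn0 2) ltn_exp2l //; lia.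
rewrite hQ in hrho.
have FF v : Fr k (Fr k v) = v ^+ Q by rewrite /Fr /Q -exprM -expnD (_ : (2 * k = k + k)%N) //; lia.
apply/eqP; rewrite eqn_leq; apply/andP; split.
- pose p : {poly F} := 'X^Q - 'X.
  have sp : size p = Q.+1.
    rewrite /p size_polyDl; rewrite ?size_polyN ?size_polyX ?size_polyXn //; lia.
  have := @max_poly_roots _ p (enum (@VP F k)).
  rewrite -cardE sp ltnS; apply.
  + by rewrite -size_poly_eq0 sp.
  + apply/allP => v; rewrite mem_enum inE FF => /eqP hv.
    by rewrite /root /p !hornerE hv subrr.
  + exact: enum_uniq.
- set N := (Q * Q - 1)%N in hrho.
  have rho0 : rho != 0.
    apply/eqP => h; have := prim_expr_order hrho; rewrite h expr0n.
    have -> : (N == 0%N) = false by apply/negbTE; rewrite /N; nia.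
    by move/eqP; rewrite eq_sym oner_eq0.
  pose rs := 0 :: [seq rho ^+ ((Q + 1) * j) | j <- iota 0 (Q - 1)].
  have srs : size rs = Q by rewrite /= size_map size_iota; lia.
  rewrite -srs cardE; apply: uniq_leq_size.
  + rewrite /= map_inj_in_uniq ?iota_uniq ?andbT.
    * apply/mapP => -[j _] /esym/eqP; by rewrite expf_eq0 (negbTE rho0) andbF.
    * move=> i j; rewrite !mem_iota !add0n => hi hj /eqP.
      rewrite (eq_prim_root_expr hrho) !modn_small; last 2 first.
      - rewrite /N; nia.
      - rewrite /N; nia.
      move/eqP => h; nia.
  + move=> x; rewrite in_cons => /orP[/eqP ->|/mapP [j _ ->]]; rewrite mem_enum inE FF.
      by rewrite expf_eq0 eqxx andbT; lia.
    rewrite -exprM (eq_prim_root_expr hrho); apply/eqP.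
    rewrite (_ : ((Q + 1) * j * Q = j * N + (Q + 1) * j)%N) ?modnMDl //.
    rewrite /N; nia.
Qed.

Unset Implicit Arguments.
Set Strict Implicit.

Theorem lemma4 (F : finFieldType) (k : nat) (hk : (2 <= k)%N)
  (hF : #|F| = (2 ^ (4 * k))%N) (rho : F)
  (hrho : (2 ^ (4 * k) - 1)%N.-primitive_root rho) :
  let n := (4 * k)%N in
  let omega := rho ^+ ((2 ^ k - 1) * (2 ^ (2 * k) + 1)) in
  let lam0 := (omega + omega ^+ (2 ^ k))^-1 in
  [/\ lam0 != 0 /\ inSub k lam0,
      tr1 k lam0 = 1,
      self_dual n (Gl k omega lam0),
      (forall lam : F, lam != 0 -> inSub k lam ->
         let P := fun d : F => [/\ d != 0, inSub k d & d ^+ (2 ^ k + 1) = lam / lam0] in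
         (exists d, P d) /\ (forall d1 d2, P d1 -> P d2 -> d1 = d2) /\
         (forall d, P d -> forall x, dual n (Gl k omega lam) x = Gl k omega lam0 (d^-1 * x)))
    & (forall a b : F, a != 0 -> b != 0 -> inSub (2 * k) a -> inSub (2 * k) b ->
         inSub k (a * b ^+ (2 ^ k)) ->
         forall lam : F, lam != 0 -> inSub k lam -> tr1 k lam = 1 ->
         forall x, DD (dual n (Gl k omega lam)) a b x = false)].
Proof.
move=> n omega lam0.
have hk' : (0 < k)%N by lia.
have ch2 : 2%N \in [pchar F] by apply: (card_finPcharP hF).
have hfix : forall x : F, x ^+ (2 ^ (4 * k)) = x by move=> x; rewrite -hF expf_card.
set q := (2 ^ k)%N.
have q2 : (2 <= q)%N by rewrite /q -{1}(expn1 2) leq_exp2l.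
have e2 : (2 ^ (2 * k) = q * q)%N by rewrite /q -expnD (_ : (2 * k = k + k)%N) //; lia.
have e4 : (2 ^ (4 * k) = q * q * q * q)%N by rewrite /q -!expnD (_ : (4 * k = k + k + k + k)%N) //; lia.
have hom1 : Fr k omega * omega = 1.
  rewrite /Fr -exprSr /omega -exprM -/q.
  have -> : ((q - 1) * (2 ^ (2 * k) + 1) * q.+1 = 2 ^ (4 * k) - 1)%N.
    rewrite e2 e4; nia.
  exact: prim_expr_order.
have homt : omega + Fr k omega != 0.
  apply/eqP => /(sum_eq0 ch2) hF1.
  have o2 : omega * omega = 1 by rewrite {1}hF1.
  have : (omega + 1) ^+ 2 = 0.
    by have := frobD ch2 1 omega 1; rewrite expn1 => ->; rewrite expr1n expr2 o2 add2.
  move/eqP; rewrite expf_eq0 /= => /eqP /(sum_eq0 ch2) o1.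
  move: o1; rewrite /omega -(expr0 rho) => /eqP; rewrite (eq_prim_root_expr hrho).
  rewrite mod0n modn_small; last by rewrite e2 e4 -/q; nia.
  by rewrite e2 -/q; apply/negP; rewrite -lt0n; nia.
exact: (all_parts ch2 hfix hom1 homt hk' (card_VP hk' hrho)).
Qed.
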